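(* Let $G$ be the path graph with vertex set $V=\{0,\dots,n-1\}$ and edges $\{v,v+1\}$, let $2^k<n$, and let $T\in\mathcal{T}_k$. For $v\in V$ let $\lambda(v)$ denote the unique leaf $\lambda$ of $T$ with $v\in V(\lambda)$. Then $C(T)$ is a maximal covered set if and only if a) $T$ has exactly $2^k$ leaves, and b) for every vertex $v\in V$ with $v-1\notin C(T)$ and $v\notin C(T)$, we have $\lambda(v-1)=\lambda(v)$.
   Context: A search strategy for a tree $H$ is a rooted binary tree defined recursively: a single node is a search strategy for any $H$; otherwise the root is labeled with an edge $uv$ of $H$ and its two child subtrees are search strategies for the components $H_u,H_v$ of $H-uv$ containing $u,v$. Nodes get vertex sets: the root gets $V(H)$, the children of a root labeled $uv$ get $V(H_u),V(H_v)$, recursively; the leaf sets partition $V$. $C(T)$ is the set of $v$ with $V(\lambda)=\{v\}$ for some leaf $\lambda$. $\mathcal{T}_k$ is the set of search strategies for $G$ of height at most $k$. $C(T)$ is a maximal covered set if there is no $T'\in\mathcal{T}_k$ with $C(T)\subsetneq C(T')$. *)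

(* Defs.v *)
From mathcomp Require Import ssreflect ssrfun ssrbool eqtype ssrnat seq choice fintype finset fingraph.
Set Implicit Arguments. Unset Strict Implicit. Unset Printing Implicit Defensive.

(* Search strategies (binary trees whose internal nodes are labeled by edges uv). *)
Inductive strat (T : Type) : Type :=
  | SLeaf : strat T
  | SNode : T -> T -> strat T -> strat T -> strat T.
Arguments SLeaf {T}.

Section SearchStrategies.
Variables (T : finType) (G : rel T).

Definition del_rel (S : {set T}) (u v : T) : rel T :=
  fun x y => [&& x \in S, y \in S, G x y &
                 ~~ (((x == u) && (y == v)) || ((x == v) && (y == u)))].

Definition comp (S : {set T}) (u v w : T) : {set T} :=
  [set x | connect (del_rel S u v) w x].

Fixpoint is_strat (S : {set T}) (t : strat T) : bool :=
  match t with
  | SLeaf => true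
  | SNode u v l r =>
      [&& u \in S, v \in S, G u v,
          is_strat (comp S u v u) l & is_strat (comp S u v v) r]
  end.

(* the vertex sets V(lambda) of the leaves, left to right *)
Fixpoint leafsets (S : {set T}) (t : strat T) : seq {set T} :=
  match t with
  | SLeaf => [:: S]
  | SNode u v l r => leafsets (comp S u v u) l ++ leafsets (comp S u v v) r
  end.

End SearchStrategies.

Fixpoint height (T : Type) (t : strat T) : nat :=
  match t with
  | SLeaf => 0
  | SNode _ _ l r => (maxn (height l) (height r)).+1
  end.

Fixpoint nleaves (T : Type) (t : strat T) : nat :=
  match t with
  | SLeaf => 1
  | SNode _ _ l r => nleaves l + nleaves r
  end.

Definition covered (T : finType) (G : rel T) (t : strat T) : {set T} :=
  [set x | [set x] \in leafsets G setT t].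

Definition in_Tk (T : finType) (G : rel T) (k : nat) (t : strat T) : Prop :=
  is_strat G setT t /\ height t <= k.

Definition maximal_covered (T : finType) (G : rel T) (k : nat) (t : strat T) : Prop :=
  ~ exists t' : strat T, in_Tk G k t' /\ covered G t \proper covered G t'.

Definition path_graph (n : nat) : rel 'I_n :=
  fun x y => (x.+1 == y :> nat) || (y.+1 == x :> nat).
Arguments path_graph : clear implicits.

(* Main.v *)
From mathcomp Require Import ssreflect ssrfun ssrbool eqtype ssrnat seq path choice fintype finset fingraph.
From mathcomp Require Import zify.
From Stdlib Require Import Classical.
Require Import Defs.

Definition itv {n : nat} (a b : nat) : {set 'I_n} := [set x : 'I_n | a <= x < b].
Lemma in_itv n a b (x : 'I_n) : (x \in itv a b) = (a <= x < b).
Proof. by rewrite inE. Qed.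

Lemma del_sym n S (u v : 'I_n) : symmetric (del_rel (path_graph n) S u v).
Proof.
move=> x y; rewrite /del_rel /path_graph.
case: (x \in S); case: (y \in S) => //=.
by rewrite orbC; congr (_ && ~~ _); rewrite orbC; congr (_ || _); rewrite andbC.
Qed.

Lemma comp_itv n a b c (u v w : 'I_n) : a < c -> c < b -> b <= n ->
  ((nat_of_ord u == c.-1) && (nat_of_ord v == c)) || ((nat_of_ord v == c.-1) && (nat_of_ord u == c)) ->
  w \in itv a b ->
  comp (path_graph n) (itv a b) u v w = if nat_of_ord w < c then itv a c else itv c b.
Proof.
move=> ac cb bn huv wS.
set e := del_rel (path_graph n) (itv a b) u v.
have step : forall x y, e x y -> [/\ x \in itv a b, y \in itv a b & (nat_of_ord x < c) = (nat_of_ord y < c)].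
  move=> x y; rewrite /e /del_rel /path_graph => /and4P [xS yS xy nuv].
  split => //; move: xS yS; rewrite !in_itv => xS yS.
  apply/idP/idP => H.
    apply/negPn/negP => H2; move/negP: nuv; apply.
    have hx : nat_of_ord x = c.-1 by move: xy H H2 => /orP [] /eqP; lia.
    have hy : nat_of_ord y = c by move: xy H H2 => /orP [] /eqP => ? ? ?; lia.
    move: huv => /orP [] /andP [] /eqP hu /eqP hv.
      by apply/orP; left; apply/andP; split; apply/eqP/ord_inj; rewrite /= ?hx ?hy ?hu ?hv.
    by apply/orP; right; apply/andP; split; apply/eqP/ord_inj; rewrite /= ?hx ?hy ?hu ?hv.
  apply/negPn/negP => H2; move/negP: nuv; apply.
  have hx : nat_of_ord y = c.-1 by move: xy H H2 => /orP [] /eqP => ? ? ?; lia.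
  have hy : nat_of_ord x = c by move: xy H H2 => /orP [] /eqP => ? ? ?; lia.
  move: huv => /orP [] /andP [] /eqP hu /eqP hv.
    by apply/orP; right; apply/andP; split; apply/eqP/ord_inj; rewrite /= ?hx ?hy ?hu ?hv.
  by apply/orP; left; apply/andP; split; apply/eqP/ord_inj; rewrite /= ?hx ?hy ?hu ?hv.
have csym : connect_sym e by apply: sym_connect_sym; apply: del_sym.
have walk : forall m (p q : 'I_n), nat_of_ord q = nat_of_ord p + m -> p \in itv a b -> q \in itv a b ->
    (nat_of_ord p < c) = (nat_of_ord q < c) -> connect e p q.
  elim=> [|m IH] p q hq pS qS hs.
    by have -> : q = p by apply: ord_inj; rewrite hq addn0.
  have q'lt : (nat_of_ord q).-1 < n by move: (ltn_ord q); lia.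
  pose q' := Ordinal q'lt.
  move: pS qS hs; rewrite !in_itv => pS qS hs.
  have q'S : q' \in itv a b by rewrite in_itv /=; lia.
  have hs' : (nat_of_ord p < c) = (nat_of_ord q' < c).
    by rewrite /=; lia.
  apply: connect_trans (IH p q' _ _ q'S hs') _; first by rewrite /=; lia.
    by rewrite in_itv.
  apply: connect1; rewrite /e /del_rel /path_graph q'S in_itv qS /=.
  have -> : (nat_of_ord q).-1.+1 == nat_of_ord q by apply/eqP; lia.
  rewrite /=; apply/negP => /orP [] /andP [] /eqP hu /eqP hv.
    move: huv; rewrite -hu -hv /=; move: hs; rewrite /=; lia.
  move: huv; rewrite -hu -hv /=; move: hs; rewrite /=; lia.
apply/setP => y; rewrite /comp inE.
apply/idP/idP.
  move=> /(closed_connect (a := [pred z | (z \in itv a b) && ((nat_of_ord z < c) == (nat_of_ord w < c))])).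
  rewrite inE /= wS eqxx => /(_ _) H.
  have /esym/andP [] : true = (y \in itv a b) && ((nat_of_ord y < c) == (nat_of_ord w < c)).
    apply: H => x z /step [xS zS hxz].
    by rewrite !inE -!in_itv xS zS /= hxz.
  rewrite !in_itv => yS /eqP hyw.
  move: wS; rewrite in_itv => wS.
  by case: ifP => hw; rewrite in_itv; move: hyw; rewrite hw; lia.
move=> hy.
have yS : y \in itv a b.
  by move: wS hy; rewrite !in_itv; case: ifP => hw; rewrite in_itv => ? ?; lia.
have hwy : (nat_of_ord w < c) = (nat_of_ord y < c).
  by move: wS hy; rewrite !in_itv; case: ifP => hw; rewrite in_itv => ? ?; lia.
case: (leqP (nat_of_ord w) (nat_of_ord y)) => hle.
  by apply: (walk (nat_of_ord y - nat_of_ord w)) => //; lia.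
rewrite csym; apply: (walk (nat_of_ord w - nat_of_ord y)) => //; lia.
Qed.

Definition sep (s : seq nat) (x y : nat) : bool :=
  has (fun d => ((x < d) && (d <= y)) || ((y < d) && (d <= x))) s.
Definition block {n : nat} (S : {set 'I_n}) (s : seq nat) (x : 'I_n) : {set 'I_n} :=
  [set y in S | ~~ sep s x y].

Lemma block_split n a b c sl sr (x : 'I_n) : a < c -> c < b ->
  all (fun d => a < d < c) sl -> all (fun d => c < d < b) sr ->
  (x \in itv a c -> block (itv a c) sl x = block (itv a b) (sl ++ c :: sr) x) /\
  (x \in itv c b -> block (itv c b) sr x = block (itv a b) (sl ++ c :: sr) x).
Proof.
move=> ac cb Hl Hr; split; rewrite in_itv => xS; apply/setP => y;
  rewrite !inE /sep has_cat /=;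
  set hl := has _ sl; set hr := has _ sr.
- case: (ltnP y c) => yc.
    have -> : hr = false by apply/hasPn => d /(allP Hr) /=; lia.
    by case: hl; lia.
  by case: hl; case: hr; lia.
- case: (ltnP y c) => yc.
    by case: hl; case: hr; lia.
  have -> : hl = false by apply/hasPn => d /(allP Hl) /=; lia.
  by case: hr; lia.
Qed.

Lemma block_leaf n a b : a < b -> b <= n ->
  forall L, L \in [:: @itv n a b] <-> exists2 x, x \in itv a b & L = block (itv a b) [::] x.
Proof.
move=> ab bn L; rewrite inE; split.
  move=> /eqP ->.
  have an : a < n by lia.
  exists (Ordinal an); first by rewrite in_itv /=; lia.
  by apply/setP => y; rewrite !inE /sep /= andbT.
move=> [x _ ->]; apply/eqP/setP => y; rewrite !inE /sep /= andbT //.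
Qed.

Lemma glue n a b c s1 s2 (ll lr : seq {set 'I_n}) m1 m2 : a < c -> c < b ->
  uniq s1 -> all (fun d => a < d < c) s1 -> m1 = (size s1).+1 ->
  (forall L, L \in ll <-> exists2 x, x \in itv a c & L = block (itv a c) s1 x) ->
  uniq s2 -> all (fun d => c < d < b) s2 -> m2 = (size s2).+1 ->
  (forall L, L \in lr <-> exists2 x, x \in itv c b & L = block (itv c b) s2 x) ->
  [/\ uniq (s1 ++ c :: s2), all (fun d => a < d < b) (s1 ++ c :: s2),
      m1 + m2 = (size (s1 ++ c :: s2)).+1 &
      forall L, (L \in ll) || (L \in lr) <->
        exists2 x, x \in itv a b & L = block (itv a b) (s1 ++ c :: s2) x].
Proof.
move=> ac cb U1 R1 M1 C1 U2 R2 M2 C2; split.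
- have n1 : c \notin s1 by apply/negP => /(allP R1) /=; lia.
  have n2 : c \notin s2 by apply/negP => /(allP R2) /=; lia.
  have n12 : ~~ has [in s1] s2.
    by apply/hasPn => d /(allP R2) /= h; apply/negP => /(allP R1) /=; lia.
  by rewrite cat_uniq /= U1 U2 n2 negb_or n1 n12.
- rewrite all_cat /=; apply/andP; split; last (apply/andP; split).
  + by apply: (sub_all _ R1) => d /=; lia.
  + by apply/andP; split; lia.
  + by apply: (sub_all _ R2) => d /=; lia.
- by rewrite size_cat /= M1 M2 addnS addSn addnS.
have BS := fun x => @block_split n a b c s1 s2 x ac cb R1 R2.
move=> L; split.
  move=> /orP [/C1 [x xS ->] | /C2 [x xS ->]].
    exists x; first by move: xS; rewrite !in_itv; lia.
    by case: (BS x) => + _; apply.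
  exists x; first by move: xS; rewrite !in_itv; lia.
  by case: (BS x) => _; apply.
move=> [x xS ->]; case: (ltnP x c) => xc.
  have xS' : x \in itv a c by move: xS; rewrite !in_itv; lia.
  apply/orP; left; apply/C1; exists x => //.
  by case: (BS x) => + _ => ->.
have xS' : x \in itv c b by move: xS; rewrite !in_itv; lia.
apply/orP; right; apply/C2; exists x => //.
by case: (BS x) => _ => ->.
Qed.

Lemma L1 n (t : strat 'I_n) : forall a b, a < b -> b <= n ->
  is_strat (path_graph n) (itv a b) t ->
  exists s, [/\ uniq s, all (fun d => a < d < b) s, nleaves t = (size s).+1 &
    forall L, L \in leafsets (path_graph n) (itv a b) t <->
      exists2 x, x \in itv a b & L = block (itv a b) s x].
Proof.
elim: t => [|u v l IHl r IHr] a b ab bn /=.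
  by move=> _; exists [::]; split => //; apply: block_leaf.
move=> /and5P [uS vS uv sl sr].
move: (uS) (vS); rewrite !in_itv => uS' vS'.
case/orP: uv => /eqP huv.
- have ac : a < v by lia.
  have cb : v < b by lia.
  have hc : ((nat_of_ord u == (nat_of_ord v).-1) && (nat_of_ord v == v)) ||
            ((nat_of_ord v == (nat_of_ord v).-1) && (nat_of_ord u == v)).
    by apply/orP; left; apply/andP; split; apply/eqP; lia.
  rewrite (@comp_itv n a b v u v u ac cb bn hc uS) (@comp_itv n a b v u v v ac cb bn hc vS) in sl sr *.
  have e1 : (nat_of_ord u < v) = true by lia.
  have e2 : (nat_of_ord v < v) = false by lia.
  rewrite e1 e2 in sl sr *.
  have [s1 [U1 R1 M1 C1]] := IHl a v ac (ltnW (leq_trans cb bn)) sl.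
  have [s2 [U2 R2 M2 C2]] := IHr v b cb bn sr.
  have [U R M C] := @glue _ _ _ _ _ _ _ _ _ _ ac cb U1 R1 M1 C1 U2 R2 M2 C2.
  exists (s1 ++ nat_of_ord v :: s2); split => // L.
  by rewrite mem_cat.
- have ac : a < u by lia.
  have cb : u < b by lia.
  have hc : ((nat_of_ord u == (nat_of_ord u).-1) && (nat_of_ord v == u)) ||
            ((nat_of_ord v == (nat_of_ord u).-1) && (nat_of_ord u == u)).
    by apply/orP; right; apply/andP; split; apply/eqP; lia.
  rewrite (@comp_itv n a b u u v u ac cb bn hc uS) (@comp_itv n a b u u v v ac cb bn hc vS) in sl sr *.
  have e1 : (nat_of_ord u < u) = false by lia.
  have e2 : (nat_of_ord v < u) = true by lia.
  rewrite e1 e2 in sl sr *.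
  have [s1 [U1 R1 M1 C1]] := IHr a u ac (ltnW (leq_trans cb bn)) sr.
  have [s2 [U2 R2 M2 C2]] := IHl u b cb bn sl.
  have [U R M C] := @glue _ _ _ _ _ _ _ _ _ _ ac cb U1 R1 M1 C1 U2 R2 M2 C2.
  exists (s1 ++ nat_of_ord u :: s2); split => //.
    by rewrite addnC.
  by move=> L; rewrite mem_cat orbC.
Qed.

Lemma sorted_split (s1 s2 : seq nat) c : sorted ltn (s1 ++ c :: s2) ->
  all (fun d => d < c) s1 /\ all (fun d => c < d) s2.
Proof.
elim: s1 => [|y s1 IH] /=.
  by rewrite (path_sortedE ltn_trans) => /andP [].
rewrite (path_sortedE ltn_trans) => /andP [H1 H2].
have [A B] := IH H2; split => //.
rewrite A andbT; move: H1; rewrite all_cat /= => /andP [_ /andP [] //].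
Qed.

Lemma nleaves_height (T : Type) (t : strat T) : nleaves t <= 2 ^ height t.
Proof.
elim: t => [|u v l IHl r IHr] //=.
rewrite expnS mul2n -addnn; apply: leq_add.
  by apply: (leq_trans IHl); apply: leq_pexp2l => //; apply: leq_maxl.
by apply: (leq_trans IHr); apply: leq_pexp2l => //; apply: leq_maxr.
Qed.

Lemma L2 n k : forall a b s, a < b -> b <= n -> sorted ltn s ->
  all (fun d => a < d < b) s -> (size s).+1 <= 2 ^ k ->
  exists t : strat 'I_n, [/\ is_strat (path_graph n) (itv a b) t, height t <= k &
    forall L, L \in leafsets (path_graph n) (itv a b) t <->
      exists2 x, x \in itv a b & L = block (itv a b) s x].
Proof.
elim: k => [|k IH] a b s ab bn so R sz.
  case: s so R sz => [|? ?] //= _ _ _.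
  by exists SLeaf; split => //; apply: block_leaf.
case: s so R sz => [|d0 s0] so R sz.
  by exists SLeaf; split => //; apply: block_leaf.
set s := d0 :: s0 in so R sz *.
pose m := minn (2 ^ k).-1 (size s).-1.
have ms : m < size s by rewrite /m /s /=; clear; lia.
pose c := nth 0 s m.
have se : s = take m s ++ c :: drop m.+1 s by rewrite -drop_nth // cat_take_drop.
have [Lc Gc] : all (fun d => d < c) (take m s) /\ all (fun d => c < d) (drop m.+1 s).
  by apply: sorted_split; rewrite -se.
have cs : c \in s by apply: mem_nth.
have /andP [ac cb] : a < c < b by apply: (allP R).
have R1 : all (fun d => a < d < c) (take m s).
  apply/allP => d dI; move: (allP Lc d dI) (allP R d (mem_take dI)) => /=; clear; lia.
have R2 : all (fun d => c < d < b) (drop m.+1 s).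
  apply/allP => d dI; move: (allP Gc d dI) (allP R d (mem_drop dI)) => /=; clear; lia.
have so1 : sorted ltn (take m s).
  by move: so; rewrite {1}se => /cat_sorted2 [].
have so2 : sorted ltn (drop m.+1 s).
  by move: so; rewrite {1}se => /cat_sorted2 [] _ /= /path_sorted.
have ex2 : 0 < 2 ^ k by rewrite expn_gt0.
have sz1 : (size (take m s)).+1 <= 2 ^ k.
  by rewrite size_take ms /m; clear; lia.
have sz2 : (size (drop m.+1 s)).+1 <= 2 ^ k.
  by move: sz; rewrite size_drop expnS /m; clear; lia.
have [tl [stl htl Cl]] := IH a c (take m s) ac (ltnW (leq_trans cb bn)) so1 R1 sz1.
have [tr [str htr Cr]] := IH c b (drop m.+1 s) cb bn so2 R2 sz2.
have c1n : c.-1 < n by move: cb bn; clear; lia.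
have cn : c < n by move: cb bn; clear; lia.
pose u := Ordinal c1n; pose v := Ordinal cn.
have hc : ((nat_of_ord u == c.-1) && (nat_of_ord v == c)) ||
          ((nat_of_ord v == c.-1) && (nat_of_ord u == c)) by rewrite /= !eqxx.
have uS : u \in itv a b by rewrite in_itv /=; move: ac cb; clear; lia.
have vS : v \in itv a b by rewrite in_itv /=; move: ac cb; clear; lia.
exists (SNode u v tl tr).
rewrite /= (@comp_itv n a b c u v u ac cb bn hc uS) (@comp_itv n a b c u v v ac cb bn hc vS).
have e1 : (nat_of_ord u < c) = true by rewrite /=; move: ac; clear; lia.
have e2 : (nat_of_ord v < c) = false by rewrite /=; clear; lia.
rewrite e1 e2; split.
- rewrite uS vS stl str /path_graph /= andbT.
  by apply/orP; left; apply/eqP; move: ac; clear; lia.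
- by rewrite ltnS geq_max htl htr.
have U1 : uniq (take m s).
  by move: so1; rewrite ltn_sorted_uniq_leq => /andP [].
have U2 : uniq (drop m.+1 s).
  by move: so2; rewrite ltn_sorted_uniq_leq => /andP [].
have [_ _ _ C] := @glue _ _ _ _ _ _ _ _ _ _ ac cb U1 R1 (erefl _) Cl U2 R2 (erefl _) Cr.
by move=> L; rewrite mem_cat -se in C *; apply: C.
Qed.

Definition cov (n : nat) (s : seq nat) (x : nat) : bool :=
  ((x == 0) || (x \in s)) && ((x.+1 == n) || (x.+1 \in s)).

Lemma setT_itv n : [set: 'I_n] = itv 0 n.
Proof. by apply/setP => x; rewrite inE in_itv ltn_ord. Qed.

Lemma covered_char n (t : strat 'I_n) s :
  (forall L, L \in leafsets (path_graph n) (itv 0 n) t <->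
      exists2 x, x \in itv 0 n & L = block (itv 0 n) s x) ->
  covered (path_graph n) t = [set x : 'I_n | cov n s x].
Proof.
move=> C; apply/setP => x; rewrite /covered setT_itv !inE.
apply/idP/idP.
  move=> /C [y yS E].
  have yy : y \in block (itv 0 n) s y.
    rewrite inE yS /sep; apply/hasPn => d _; clear; lia.
  move: (yy); rewrite -E inE => /eqP exy; subst y.
  apply/andP; split; apply/negPn/negP => /norP [h0 hs].
    have x1n : x.-1 < n by move: (ltn_ord x); clear; lia.
    have : Ordinal x1n \in block (itv 0 n) s x.
      rewrite !inE /= x1n /sep; apply/hasPn => d ds; apply/negP => H.
      have dx : d = x by move: H h0; clear; lia.
      by move: hs; rewrite -dx ds.
    rewrite -E inE => /eqP /(congr1 (@nat_of_ord n)) /=; move: h0; clear; lia.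
  have x1n : x.+1 < n by move: (ltn_ord x) h0; clear; lia.
  have : Ordinal x1n \in block (itv 0 n) s x.
    rewrite !inE /= x1n /sep; apply/hasPn => d ds; apply/negP => H.
    have dx : d = x.+1 by move: H; clear; lia.
    by move: hs; rewrite -dx ds.
  rewrite -E inE => /eqP /(congr1 (@nat_of_ord n)) /=; clear; lia.
move=> /andP [h1 h2]; apply/C; exists x; first by rewrite in_itv ltn_ord.
apply/setP => z; rewrite !inE ltn_ord /=.
case: (eqVneq z x) => [->|nzx].
  by rewrite /sep; symmetry; apply/hasPn => d _; clear; lia.
symmetry; apply/negbTE/negPn/hasP.
have zx : nat_of_ord z != nat_of_ord x by [].
case: (ltnP z x) => hzx.
  exists (nat_of_ord x); last by clear -hzx; lia.
  by move: h1 hzx; clear; case: (x == 0 :> nat) /eqP => //= ->.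
exists (nat_of_ord x).+1; last by move: hzx zx; clear; lia.
case/orP: h2 => // /eqP hn.
by move: (ltn_ord z) hzx zx hn; clear; lia.
Qed.

Lemma same_char n (t : strat 'I_n) s (u v : 'I_n) :
  (forall L, L \in leafsets (path_graph n) (itv 0 n) t <->
      exists2 x, x \in itv 0 n & L = block (itv 0 n) s x) ->
  nat_of_ord v = (nat_of_ord u).+1 ->
  (exists2 L, L \in leafsets (path_graph n) [set: 'I_n] t & (u \in L) && (v \in L))
  <-> (nat_of_ord v \notin s).
Proof.
move=> C huv; rewrite setT_itv; split.
  move=> [L /C [y yS ->]] /andP []; rewrite !inE => /andP [_ hu] /andP [_ hv].
  apply/negP => vs.
  case: (ltnP y v) => hy.
    by move/negP: hv; apply; apply/hasP; exists (nat_of_ord v) => //; clear -hy; lia.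
  by move/negP: hu; apply; apply/hasP; exists (nat_of_ord v) => //; move: hy huv; clear; lia.
move=> vs; exists (block (itv 0 n) s v).
  by apply/C; exists v => //; rewrite in_itv ltn_ord.
rewrite !inE !ltn_ord /=; apply/andP; split; apply/hasPn => d ds; apply/negP => H.
  have dv : d = v by move: H huv; clear; lia.
  by move: vs; rewrite -dv ds.
clear -H; lia.
Qed.

Lemma find_step (P : nat -> bool) m : P 0 -> ~~ P m -> exists a, [/\ a < m, P a & ~~ P a.+1].
Proof.
elim: m => [|m IH] h0 hm; first by rewrite h0 in hm.
case: (boolP (P m)) => pm.
  by exists m.
have [a [am pa npa]] := IH h0 pm; exists a; split => //; clear -am; lia.
Qed.

Theorem lemmaA2 (n k : nat) (t : strat 'I_n) :
  2 ^ k < n ->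
  in_Tk (path_graph n) k t ->
  (maximal_covered (path_graph n) k t <->
   (nleaves t = 2 ^ k /\
    forall u v : 'I_n, val u = (val v).-1 -> 0 < val v ->
      u \notin covered (path_graph n) t -> v \notin covered (path_graph n) t ->
      exists2 L, L \in leafsets (path_graph n) setT t & (u \in L) && (v \in L))).
Proof.
move=> hn [st ht].
have n0 : 0 < n by move: hn; clear; lia.
have ex0 : 0 < 2 ^ k by rewrite expn_gt0.
have st' : is_strat (path_graph n) (itv 0 n) t by rewrite -setT_itv.
have [s [Us Rs Ns Cs]] := @L1 n t 0 n n0 (leqnn n) st'.
have covE := @covered_char _ _ _ Cs.
have hN : nleaves t <= 2 ^ k := leq_trans (@nleaves_height _ t) (leq_pexp2l (isT : 0 < 2) ht).
have build : forall s', uniq s' -> all (fun d => 0 < d < n) s' -> (size s').+1 <= 2 ^ k ->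
    exists t', in_Tk (path_graph n) k t' /\
      covered (path_graph n) t' = [set x : 'I_n | cov n s' x].
  move=> s' U' R' S'.
  have so : sorted ltn (sort leq s').
    by rewrite ltn_sorted_uniq_leq sort_uniq U' (sort_sorted leq_total).
  have R'' : all (fun d => 0 < d < n) (sort leq s') by rewrite all_sort.
  have S'' : (size (sort leq s')).+1 <= 2 ^ k by rewrite size_sort.
  have [t' [st2 ht2 C2]] := @L2 n k 0 n (sort leq s') n0 (leqnn n) so R'' S''.
  exists t'; split; first by split => //; rewrite setT_itv.
  by rewrite (@covered_char _ _ _ C2); apply/setP => x; rewrite !inE /cov !mem_sort.
split.
- move=> Hmax.
  have Hnot : forall s', uniq s' -> all (fun d => 0 < d < n) s' -> (size s').+1 <= 2 ^ k ->
      (forall x, cov n s x -> cov n s' x) -> forall x : 'I_n, cov n s' x -> cov n s x.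
    move=> s' U' R' S' sub x hx; apply/negPn/negP => hnx; apply: Hmax.
    have [t' [T' C']] := build s' U' R' S'.
    exists t'; split => //; rewrite covE C' properE; apply/andP; split.
      by apply/subsetP => y; rewrite !inE; apply: sub.
    apply/negP => /subsetP /(_ x); rewrite !inE hx => /(_ isT) h.
    by rewrite h in hnx.
  split.
  + apply/eqP; rewrite eqn_leq hN /= leqNgt; apply/negP => hlt.
    rewrite Ns in hlt.
    case: (classic (exists c, [/\ c.+1 < n, (c == 0) || (c \in s) & c.+1 \notin s]))
      => [[c [c1 hc0 hc1]] | H].
      have cn : c < n by move: c1; clear; lia.
      have U' : uniq (c.+1 :: s) by rewrite /= hc1 Us.
      have R' : all (fun d => 0 < d < n) (c.+1 :: s) by rewrite /= Rs c1.
      have S' : (size (c.+1 :: s)).+1 <= 2 ^ k by exact: hlt.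
      have sub : forall x, cov n s x -> cov n (c.+1 :: s) x.
        move=> x /andP [h1 h2]; rewrite /cov !in_cons; apply/andP; split.
          by case/orP: h1 => ->; rewrite ?orbT.
        by case/orP: h2 => ->; rewrite ?orbT.
      have := Hnot _ U' R' S' sub (Ordinal cn).
      rewrite /cov /= !in_cons eqxx orbT andbT.
      have -> : (c == c.+1) = false by clear; lia.
      rewrite /= hc0 (negbTE hc1) orbF => /(_ isT) /eqP.
      by move: c1; clear; lia.
    have all_in : forall m, 0 < m < n -> m \in s.
      elim=> [|m IH] //; move=> /andP [_ mn].
      apply/negPn/negP => nm; apply: H; exists m; split => //.
      case: (posnP m) => [->|mp] //.
      by rewrite IH ?orbT //; apply/andP; split => //; move: mn; clear; lia.
    have : size (iota 1 n.-1) <= size s.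
      apply: uniq_leq_size (iota_uniq _ _) _ => m; rewrite mem_iota => hm.
      by apply: all_in; move: hm n0; clear; lia.
    by rewrite size_iota; move: hlt hn; clear; lia.
  + move=> u v huv v0 hu hv.
    have huv' : nat_of_ord v = (nat_of_ord u).+1 by move: huv v0 => /= ; clear; lia.
    apply/(@same_char _ _ _ _ _ Cs huv'); apply/negP => vs.
    rewrite covE !inE /cov in hu hv.
    have vs' : nat_of_ord v \in s by [].
    rewrite huv' in vs.
    rewrite vs orbT andbT in hu.
    rewrite vs' orbT /= in hv.
    case/norP: hu => u0 us; case/norP: hv => v1n v1s.
    rewrite huv' in v1n v1s.
    have [a [au pa npa]] := @find_step (fun a => (a == 0) || (a \in s)) (nat_of_ord u) isT (negbT (introF orP (fun H => match H with or_introl h => (negP u0) h | or_intror h => (negP us) h end))).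
    move: npa => /= a1s.
    have vn : nat_of_ord v < n := ltn_ord v.
    have an : a < n by move: au huv' vn; clear; lia.
    have memr : forall y, (y \in rem (nat_of_ord u).+1 s) = (y != (nat_of_ord u).+1) && (y \in s).
      by move=> y; rewrite (mem_rem_uniq _ Us) inE.
    pose s' := a.+1 :: rem (nat_of_ord u).+1 s.
    have U' : uniq s'.
      by rewrite /s' /= rem_uniq // andbT; apply/negP => /mem_rem; rewrite (negbTE a1s).
    have R' : all (fun d => 0 < d < n) s'.
      rewrite /s' /=; apply/andP; split; first by move: au huv' vn; clear; lia.
      by apply/allP => y /mem_rem /(allP Rs).
    have S' : (size s').+1 <= 2 ^ k.
      rewrite /s' /= size_rem //; move: hN; rewrite Ns.
      have sp : 0 < size s by move: vs; case: (s).
      by rewrite prednK.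
    have sub : forall x, cov n s x -> cov n s' x.
      move=> x hx.
      have xv : (x == (nat_of_ord u).+1) = false.
        by apply/negP => /eqP ex; move: hx; rewrite /cov ex (negbTE v1n) (negbTE v1s) andbF.

      have x1v : (x.+1 == (nat_of_ord u).+1) = false.
        apply/negP => /eqP ex; have ex' : x = nat_of_ord u by move: ex; clear; lia.
        by move: hx; rewrite /cov ex' (negbTE u0) (negbTE us).
      move: hx => /andP [h1 h2]; rewrite /cov /s' !in_cons !memr xv x1v /=.
      apply/andP; split.
        by case/orP: h1 => ->; rewrite ?orbT.
      by case/orP: h2 => ->; rewrite ?orbT.
    have := Hnot _ U' R' S' sub (Ordinal an).
    rewrite /cov /s' /= !in_cons !memr eqxx orbT andbT.
    have -> : (a == (nat_of_ord u).+1) = false by move: au; clear; lia.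
    rewrite /= (negbTE a1s).
    have -> : (a.+1 == n) = false by move: au huv' vn; clear; lia.
    have -> : (a == a.+1) = false by clear; lia.
    rewrite /= andbF => H; suff : false by []; apply: H.
    by case/orP: pa => ->; rewrite ?orbT.
- move=> [hsz hb] [t' [[st2 ht2] hprop]].
  have st2' : is_strat (path_graph n) (itv 0 n) t' by rewrite -setT_itv.
  have [s' [Us' Rs' Ns' Cs']] := @L1 n t' 0 n n0 (leqnn n) st2'.
  have covE' := @covered_char _ _ _ Cs'.
  have hN' : nleaves t' <= 2 ^ k := leq_trans (@nleaves_height _ t') (leq_pexp2l (isT : 0 < 2) ht2).
  have ps := proper_sub hprop.
  have sub : {subset s <= s'}.
    move=> d ds; have /andP [d0 dn] := allP Rs d ds.
    have d1n : d.-1 < n by move: dn; clear; lia.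
    pose u := Ordinal d1n; pose v := Ordinal dn.
    have huv' : nat_of_ord v = (nat_of_ord u).+1 by rewrite /= prednK.
    have nex := @same_char _ _ _ _ _ Cs huv'.
    have cuv : (u \in covered (path_graph n) t) || (v \in covered (path_graph n) t).
      apply/negPn/negP => /norP [nu nv].
      have := hb u v (erefl _) d0 nu nv; rewrite nex /= ds //.
    case/orP: cuv => /(subsetP ps); rewrite covE' inE /cov /= => /andP [].
      move=> _; rewrite prednK //; case/orP => // /eqP dE.
      by move: (dn); rewrite dE ltnn.
    by case/orP => // /eqP d0E; move: (d0); rewrite d0E.
  have sz : size s' <= size s by move: hN'; rewrite Ns' -hsz Ns ltnS.
  have [_ eqs] := uniq_min_size Us sub sz.
  have E : covered (path_graph n) t = covered (path_graph n) t'.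
    by rewrite covE covE'; apply/setP => x; rewrite !inE /cov !eqs.
  by move: hprop; rewrite E properxx.
Qed.
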